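(* Assume the network is regular. Let $j^*\in\mathcal E$ and $m'\in\mathcal M$. Then $j^*\leadsto m'$ if and only if there exists a partial child selection $J^\vee:\mathcal M\setminus\{m'\}\to\mathcal E\setminus\{j^*\}$ (injective, with $m\vdash J^\vee(m)$ for all $m\ne m'$) such that the augmented set $\{j^*\}\cup J^\vee(\mathcal M\setminus\{m'\})$ selects an $S$-basis.
   Context: A reaction network consists of a finite set of metabolites $\mathcal M=\{1,\dots,M\}$ and a finite set of reactions $\mathcal E=\{1,\dots,E\}$. Each reaction $j$ has an input stoichiometric vector $y^j\in\mathbb R_{\ge0}^M$ and an output stoichiometric vector $\bar y^j\in\mathbb R_{\ge0}^M$. Write $m\vdash j$ iff $y^j_m\neq 0$. The stoichiometric matrix $S$ is the real $M\times E$ matrix whose $j$-th column is $S^j=\bar y^j-y^j$; it is assumed to have full rank $M$. The rate matrix $R=(r_{jm})$ is the $E\times M$ matrix whose entries $r_{jm}$ with $m\vdash j$ are independent indeterminates, and $r_{jm}=0$ whenever $m\not\vdash j$. ''Nonzero algebraically'' means nonzero as a polynomial/rational function in these indeterminates. For $\mathcal E'\subseteq\mathcal E$, $S^{\mathcal E'}$ denotes the submatrix of columns indexed by $\mathcal E'$; $\mathcal E'$ selects an $S$-basis if $|\mathcal E'|=M$ and $\det S^{\mathcal E'}\neq0$. A child selection is an injective map $J:\mathcal M\to\mathcal E$ with $m\vdash J(m)$ for all $m$. The network is regular if $\det(SR)\ne0$ algebraically. Let $B=\begin{pmatrix}-\mathrm{id}_{\mathcal E}&R\\ S&0\end{pmatrix}$,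 a square matrix with rows and columns indexed by the disjoint union $\mathcal E\sqcup\mathcal M$; for a regular network it is invertible over the field of rational functions in the $r_{jm}$. For $\alpha\in\mathcal E\sqcup\mathcal M$ set $z^\alpha=-B^{-1}e_\alpha$, and write $\alpha\leadsto\beta$ for $\beta\in\mathcal E\sqcup\mathcal M$ if $z^\alpha_\beta$ is nonzero algebraically. (For $j^*\in\mathcal E$, the $\mathcal M$-part of $z^{j^*}$ is $\delta x^{j^*}=-(SR)^{-1}Se_{j^*}$.) *)

(* Defs.v *)
From HB Require Import structures.
From mathcomp Require Import all_boot all_order all_algebra.
Set Implicit Arguments. Unset Strict Implicit. Unset Printing Implicit Defensive.
Import Order.TTheory GRing.Theory Num.Theory.
Local Open Scope ring_scope.

(* Polynomial ring in n commuting indeterminates over an integral domain R,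
   built as iterated univariate polynomials R[x_0][x_1]...[x_{n-1}]. *)
Fixpoint mpoly (R : idomainType) (n : nat) : idomainType :=
  if n is n'.+1 then ({poly mpoly R n'} : idomainType) else R.

Fixpoint mconst (R : idomainType) (n : nat) (c : R) : mpoly R n :=
  if n is n'.+1 return mpoly R n then (mconst n' c)%:P else c.

(* the indeterminate x_i (i < n) in R[x_0,...,x_{n-1}] (0 if i >= n) *)
Fixpoint mvar (R : idomainType) (n : nat) (i : nat) : mpoly R n :=
  if n is n'.+1 return mpoly R n then
    (if i == n' then 'X else (mvar R n' i)%:P) else 0.

Definition ratfun (R : idomainType) (n : nat) : fieldType := {fraction (mpoly R n)}.

Section Network.
Variables (F : realFieldType) (M E : nat).
(* y, ybar : M x E matrices whose j-th columns are the input / output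
   stoichiometric vectors y^j, ybar^j. *)
Variables (y ybar : 'M[F]_(M, E)).

Definition stoich : 'M[F]_(M, E) := ybar - y.

(* m |- j  iff  y^j_m <> 0 *)
Definition dep (m : 'I_M) (j : 'I_E) : bool := y m j != 0.

Definition nvars : nat := (E * M)%N.
Definition K : fieldType := ratfun F nvars.

(* indeterminate r_{jm} is variable number j*M + m *)
Definition rvar (j : 'I_E) (m : 'I_M) : K :=
  FracField.tofrac (mvar F nvars (j * M + m)%N).

Definition rateK : 'M[K]_(E, M) :=
  \matrix_(j, m) (if dep m j then rvar j m else 0).

Definition stoichK : 'M[K]_(M, E) :=
  map_mx (fun c : F => FracField.tofrac (mconst nvars c)) stoich.

Definition regular : bool := \det (stoichK *m rateK) != 0.

Definition Bmat : 'M[K]_(E + M) := block_mx (- 1%:M) rateK stoichK 0.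

(* z^alpha = - B^{-1} e_alpha ; z^alpha_beta *)
Definition zvec (alpha beta : 'I_(E + M)) : K := - (invmx Bmat) beta alpha.

Definition leadsto (alpha beta : 'I_(E + M)) : bool := zvec alpha beta != 0.

(* E' selects an S-basis: |E'| = M and det S^{E'} <> 0 (columns of S^{E'}
   listed via some bijection 'I_M -> E'; the nonvanishing of the determinant
   does not depend on the ordering). *)
Definition selects_basis (Es : {set 'I_E}) : Prop :=
  exists f : 'I_M -> 'I_E,
    [/\ injective f, [set f k | k : 'I_M] = Es & \det (colsub f stoich) != 0].

End Network.

(* Main.v *)
From HB Require Import structures.
From mathcomp Require Import all_boot all_order all_algebra.
From mathcomp Require Import perm fingroup.
Require Import Defs.
Import Order.TTheory GRing.Theory Num.Theory.
Local Open Scope ring_scope.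

Lemma det_mul_expand (R : comNzRingType) m n (S : 'M[R]_(m,n)) (T : 'M[R]_(n,m)) :
  \det (S *m T) = \sum_(f : {ffun 'I_m -> 'I_n}) (\prod_i T (f i) i) * \det (colsub f S).
Proof.
rewrite -det_tr /determinant.
transitivity (\sum_(s : 'S_m) \sum_(f : {ffun 'I_m -> 'I_n})
   (\prod_i T (f i) i) * ((-1) ^+ s * \prod_i S (s i) (f i))).
  apply: eq_bigr => s _.
  have -> : \prod_i (S *m T)^T i (s i) = \prod_i \sum_k S (s i) k * T k i.
    by apply: eq_bigr => i _; rewrite !mxE.
  have -> : \prod_i \sum_k S (s i) k * T k i =
     \sum_(f : {ffun 'I_m -> 'I_n}) \prod_i (S (s i) (f i) * T (f i) i).
    exact: bigA_distr_bigA.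
  rewrite mulr_sumr; apply: eq_bigr => f _.
  by rewrite big_split /= mulrA [LHS]mulrC.
rewrite exchange_big /=; apply: eq_bigr => f _.
have -> : \sum_(s : 'S_m) (-1) ^+ s * \prod_i colsub f S i (s i) = \det (colsub f S)^T.
  by rewrite det_tr.
rewrite /determinant mulr_sumr; apply: eq_bigr => s _; congr (_ * (_ * _)).
by apply: eq_bigr => i _; rewrite !mxE.
Qed.
Lemma invB_block (K : fieldType) m e (S : 'M[K]_(m,e)) (R : 'M[K]_(e,m)) :
  S *m R \in unitmx ->
  invmx (block_mx (- 1%:M) R S 0) =
  block_mx (R *m invmx (S *m R) *m S - 1%:M) (R *m invmx (S *m R))
           (invmx (S *m R) *m S) (invmx (S *m R)).
Proof.
move=> U; set X := invmx (S *m R).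
set B := block_mx _ _ _ _; set C := block_mx _ _ _ _.
have BC : B *m C = 1%:M.
  rewrite /B /C mulmx_block [1%:M as X in _ = X]scalar_mx_block.
  rewrite !mulNmx !mul1mx !mul0mx !addr0.
  congr block_mx.
  - by rewrite mulmxA opprB subrK.
  - by rewrite addNr.
  - by rewrite mulmxBr mulmx1 !mulmxA mulmxV // mul1mx subrr.
  - by rewrite mulmxA mulmxV.
have [UB _] := mulmx1_unit BC.
by rewrite -[C](mulKmx UB) BC mulmx1.
Qed.

Lemma cramer_entry (K : fieldType) n e (A A' : 'M[K]_n) (S : 'M[K]_(n,e)) (i0 : 'I_n) (j : 'I_e) :
  A \in unitmx -> (forall i, A' i i0 = S i j) -> col' i0 A' = col' i0 A ->
  (invmx A *m S) i0 j = (\det A)^-1 * \det A'.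
Proof.
move=> U H1 H2.
rewrite /invmx U -scalemxAl mxE; congr (_ * _).
rewrite mxE (expand_det_col A' i0); apply: eq_bigr => k _.
by rewrite H1 mxE /cofactor H2 mulrC.
Qed.

Lemma det_colsub_perm (R : comNzRingType) m e (S : 'M[R]_(m,e)) (f g : 'I_m -> 'I_e) :
  injective f -> injective g -> [set f k | k : 'I_m] = [set g k | k : 'I_m] ->
  \det (colsub g S) != 0 -> \det (colsub f S) != 0.
Proof.
move=> fi gi E D.
have ex : forall k, exists k2, g k2 == f k.
  move=> k; have : f k \in [set g k | k : 'I_m] by rewrite -E imset_f.
  by case/imsetP => k2 _ ->; exists k2.
pose sg k := odflt k [pick k2 | g k2 == f k].
have sgE k : g (sg k) = f k.
  rewrite /sg; case: pickP => [k2 /eqP //|H].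
  by case: (ex k) => k2; rewrite H.
have sgi : injective sg by move=> a b Hab; apply: fi; rewrite -!sgE Hab.
have -> : colsub f S = col_perm (perm sgi) (colsub g S).
  by apply/matrixP => i k; rewrite !mxE permE sgE.
rewrite col_permE det_mulmx det_perm.
by case: (perm.odd_perm _); rewrite ?expr0 ?expr1 ?mulr1 ?mulrN1 ?oppr_eq0.
Qed.
Fixpoint mevalR (F : idomainType) (a : nat -> F) (n : nat) : {rmorphism mpoly F n -> F} :=
  if n is n'.+1 return {rmorphism mpoly F n -> F} then
    (horner_eval (a n') \o map_poly (mevalR F a n'))%FUN else idfun.
Lemma mevalR_S F a n (p : {poly mpoly F n}) : mevalR F a n.+1 p = (map_poly (mevalR F a n) p).[a n].
Proof. by []. Qed.
Lemma mevalR_const F a n c : mevalR F a n (mconst n c) = c.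
Proof. elim: n => [//|n IH]. apply: (etrans (mevalR_S _ _ _ (mconst n c)%:P)). 
 rewrite map_polyC hornerC. exact: IH. Qed.
Lemma mevalR_var F a n i : (i < n)%N -> mevalR F a n (mvar F n i) = a i.
Proof. elim: n => [//|n IH]. rewrite ltnS leq_eqVlt.
 case: (eqVneq i n) => [->|ne] H; rewrite [mvar _ _ _]/= ?eqxx ?(negbTE ne).
  apply: (etrans (mevalR_S _ _ _ 'X)). by rewrite map_polyX hornerX.
apply: (etrans (mevalR_S _ _ _ (mvar F n i)%:P)). rewrite map_polyC hornerC. exact: IH. Qed.
Fixpoint mconstR (F : idomainType) (n : nat) : {rmorphism F -> mpoly F n} :=
  if n is n'.+1 return {rmorphism F -> mpoly F n} then
    (polyC \o mconstR F n')%FUN else idfun.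
Lemma mconstRE F n c : mconstR F n c = mconst n c.
Proof. elim: n => [//|n IH]. by rewrite /= IH. Qed.

Lemma imset_split (T T' : finType) (g : T -> T') (x : T) :
  [set g k | k : T] = g x |: [set g k | k in [set k | k != x]].
Proof.
apply/setP => z; rewrite in_setU1; apply/imsetP/idP => [[k _ ->]|].
  case: (eqVneq k x) => [->|ne]; rewrite ?eqxx //; apply/orP; right.
  by apply/imsetP; exists k => //; rewrite inE.
case/orP => [/eqP ->|/imsetP [k _ ->]]; by [exists x | exists k].
Qed.

Theorem theorem2p3 (F : realFieldType) (M E : nat) (y ybar : 'M[F]_(M, E))
  (hy : forall m j, 0 <= y m j) (hybar : forall m j, 0 <= ybar m j)
  (hrank : \rank (stoich y ybar) = M)
  (hreg : regular y ybar)
  (jstar : 'I_E) (m' : 'I_M) :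
  leadsto y ybar (lshift M jstar) (rshift E m') <->
  exists J : 'I_M -> 'I_E,
    [/\ (forall m1 m2, m1 != m' -> m2 != m' -> J m1 = J m2 -> m1 = m2),
        (forall m, m != m' -> J m != jstar /\ dep y m (J m)) &
        selects_basis y ybar (jstar |: [set J m | m in [set m | m != m']])].
Proof.
set n := nvars M E.
set S := stoich y ybar.
set SK := stoichK y ybar. set RK := rateK y.
have Mpos : (0 < M)%N := leq_ltn_trans (leq0n _) (ltn_ord m').
have UA : SK *m RK \in unitmx by rewrite unitmxE unitfE.
pose RP : 'M[mpoly F n]_(E,M) := \matrix_(k, m)
   if m == m' then (k == jstar)%:R else if dep y m k then mvar F n (k*M+m) else 0.
pose SP : 'M[mpoly F n]_(M,E) := map_mx (mconst n) S.
have key : leadsto y ybar (lshift M jstar) (rshift E m') = (\det (SP *m RP) != 0).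
  rewrite /leadsto /zvec oppr_eq0 /Bmat -/SK -/RK invB_block // block_mxEdl.
  rewrite (@cramer_entry _ _ _ _ (map_mx (@FracField.tofrac _) (SP *m RP)) _ m' jstar UA).
  - rewrite mulf_eq0 invr_eq0 negb_or (negbTE hreg) /=.
    by rewrite det_map_mx tofrac_eq0.
  - move=> i; rewrite !mxE (bigD1 jstar) //= big1 => [|k /negbTE nk]; last first.
      by rewrite /RP !mxE eqxx nk mulr0.
    rewrite /RP /SP /S !mxE !eqxx mulr1 addr0. done.
  - apply/matrixP => i l; rewrite !mxE rmorph_sum; apply: eq_bigr => k _.
    rewrite rmorphM /RP /SP !mxE eq_sym (negbTE (neq_lift _ _)) /rvar.
    by case: dep; rewrite ?rmorph0.
split.
  move/idP; rewrite key det_mul_expand => D.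
  have [f Hf] : exists f : {ffun 'I_M -> 'I_E}, (\prod_i RP (f i) i) * \det (colsub f SP) != 0.
    apply/existsP; apply: contraR D => /existsPn H; rewrite big1 // => f _.
    by apply/eqP; move: (H f); rewrite negbK.
  move: Hf; rewrite mulf_eq0 negb_or => /andP [HP HD].
  have HR i : RP (f i) i != 0.
    by apply: contra HP => /eqP Hi; apply/prodf_eq0; exists i => //; rewrite Hi.
  have Hm' : f m' = jstar.
    move: (HR m'); rewrite /RP mxE eqxx; case: (f m' =P jstar) => // _; by rewrite /= mulr0n eqxx.
  have Hdep m : m != m' -> dep y m (f m).
    move=> ne; move: (HR m); rewrite /RP mxE (negbTE ne); by case: dep => //; rewrite eqxx.
  have HD' : \det (colsub f S) != 0.
    move: HD; have -> : colsub f SP = map_mx (mconstR F n) (colsub f S).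
      by apply/matrixP => i k; rewrite !mxE mconstRE.
    rewrite det_map_mx; apply: contra => /eqP ->; by rewrite rmorph0.
  have finj : injective f.
    move=> a b Hab; apply/eqP; apply: contraR HD' => nab.
    by rewrite -det_tr (determinant_alternate nab) // => k; rewrite !mxE Hab.
  exists f; split.
  - by move=> a b _ _; apply: finj.
  - move=> m ne; split; last exact: Hdep.
    by apply: contra ne => /eqP H; apply/eqP; apply: finj; rewrite H Hm'.
  - exists f; split => //. by rewrite (@imset_split _ _ f m') Hm'.
case=> J [hinj hJ [g [gi gim gdet]]].
pose f0 m := if m == m' then jstar else J m.
have f0i : injective f0.
  move=> a b; rewrite /f0; case: (eqVneq a m') => [->|na]; case: (eqVneq b m') => [->|nb] //.
  - by move=> H; have := (hJ b nb).1; rewrite -H eqxx.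
  - by move=> H; have := (hJ a na).1; rewrite H eqxx.
  - by apply: hinj.
have f0im : [set f0 k | k : 'I_M] = jstar |: [set J m | m in [set m | m != m']].
  rewrite (@imset_split _ _ f0 m') {1}/f0 eqxx; congr (_ |: _).
  by apply: eq_in_imset => m; rewrite inE /f0 => /negbTE ->.
have D0 : \det (colsub f0 S) != 0.
  by apply: (@det_colsub_perm _ _ _ S f0 g f0i gi _ gdet); rewrite f0im gim.
apply/idP; rewrite key.
pose a i := ([exists m : 'I_M, (m != m') && (i == (f0 m * M + m)%N)])%:R : F.
have aE (k : 'I_E) (m : 'I_M) : m != m' -> a (k * M + m)%N = (k == J m)%:R.
  move=> ne; rewrite /a; congr (_%:R); congr (nat_of_bool _); apply/idP/idP => [/existsP [m2 /andP [ne2 /eqP Heq]]| /eqP ->].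
    have Hm : (m : nat) = m2.
      by move/(congr1 (modn^~ M)): Heq; rewrite !modnMDl !modn_small.
    have Hk : (k : nat) = f0 m2.
      by move/(congr1 (divn^~ M)): Heq; rewrite !divnMDl // !divn_small // !addn0.
    have {}Hm : m = m2 := val_inj Hm.
    subst m2; apply/eqP; apply: val_inj; by rewrite /= Hk /f0 (negbTE ne).
  by apply/existsP; exists m; rewrite ne /f0 (negbTE ne) eqxx.
have P0 : map_mx (mevalR F a n) RP = \matrix_(k, m) (k == f0 m)%:R.
  apply/matrixP => k m; rewrite /RP !mxE /f0; case: (m =P m') => [Hm|/eqP ne]; [subst m|].
    by rewrite rmorph_nat.
  case Hd : (dep y m k).
    rewrite mevalR_var ?aE //.
    rewrite /n /nvars (leq_trans (_ : _ < k * M + M)%N) // ?ltn_add2l //.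
    by rewrite -mulSnr leq_mul2r ltn_ord orbT.
  rewrite rmorph0; case: (eqVneq k (J m)) => [Hk|] //=.
  by move: (hJ m ne).2; rewrite -Hk Hd.
have SP0 : map_mx (mevalR F a n) SP = S by apply/matrixP => i k; rewrite !mxE mevalR_const.
have colsubE : S *m \matrix_(k,m) (k == f0 m)%:R = colsub f0 S.
  apply/matrixP => i m; rewrite /S /stoich !mxE (bigD1 (f0 m)) //= !mxE eqxx mulr1 big1 ?addr0 // => k nk.
  by rewrite mxE (negbTE nk) mulr0.
apply: contra D0 => /eqP H0.
have := det_map_mx (mevalR F a n) (SP *m RP).
by rewrite H0 rmorph0 map_mxM SP0 P0 colsubE => ->.
Qed.
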